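(* Let $R$ be a ring with identity, $(S,\leq)$ a strictly ordered monoid which is quasitotally ordered, and $\omega:S\to\mathrm{End}(R)$ a monoid homomorphism. Assume $R$ is $(S,\omega)$-Armendariz, and let $A=R[[S,\omega]]$. (1) If $A$ is a generalized right Baer ring, then $R$ is a generalized right Baer ring. (2) If moreover $R$ is $S$-compatible and $A$ is a generalized right quasi-Baer ring, then $R$ is a generalized right quasi-Baer ring.
   Context: All rings are associative with identity. For a nonempty subset $X$ of a ring $R$, $r_R(X)=\{a\in R : xa=0 \text{ for all } x\in X\}$ is its right annihilator, and for a positive integer $n$, $X^n$ denotes the set of all products $a_1a_2\cdots a_n$ with $a_i\in X$ for $1\le i\le n$. A ring $R$ is generalized right Baer if for every nonempty subset $X$ of $R$ there exist a positive integer $n$ (depending on $X$) and an idempotent $e\in R$ with $r_R(X^n)=eR$. A ring $R$ is generalized right quasi-Baer if for every right ideal $I$ of $R$ there exist a positive integer $n$ (depending on $I$) and an idempotent $e\in R$ with $r_R(I^n)=eR$. An ordered monoid $(S,\leq)$ is a monoid with a partial order such that $u\le v$ implies $ut\le vt$ and $tu\le tv$ for all $t\in S$; it is strictly ordered if $u<v$ implies $ut<vt$ and $tu<tv$ for all $t\in S$. It is quasitotally ordered if $\leq$ can be refined to an order $\preceq$ with respect to which $S$ is a strictly totally ordered monoid. A subset of $S$ is artinian if every strictly decreasing sequence in it is finite, and narrow if every subset of pairwise incomparable elements is finite. Given a ring $R$, a strictly ordered monoid $(S,\le)$ and a monoid homomorphism $\omega:S\to\mathrm{End}(R)$, $s\mapsto\omega_s$,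 the ring of skew generalized power series $R[[S,\omega]]$ is the set of all maps $f:S\to R$ whose support $\mathrm{supp}(f)=\{s\in S: f(s)\neq 0\}$ is artinian and narrow, with pointwise addition and multiplication $(fg)(s)=\sum_{(u,v)\in X_s(f,g)} f(u)\,\omega_u(g(v))$, where $X_s(f,g)=\{(u,v)\in S\times S: uv=s,\ f(u)\ne0,\ g(v)\ne0\}$ (a finite set; an empty sum is $0$). An endomorphism $\sigma$ of $R$ is compatible if for all $a,b\in R$: $ab=0 \iff a\sigma(b)=0$. $R$ is $S$-compatible if $\omega_s$ is compatible for every $s\in S$. $R$ is $(S,\omega)$-Armendariz if whenever $f,g\in R[[S,\omega]]$ satisfy $fg=0$, then $f(s)\,\omega_s(g(t))=0$ for all $s,t\in S$. *)

(* Defs.v *)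
From HB Require Import structures.
From mathcomp Require Import all_boot all_order all_algebra.
From mathcomp Require Import boolp classical_sets cardinality fsbigop.
Set Implicit Arguments. Unset Strict Implicit. Unset Printing Implicit Defensive.
Import GRing.Theory.
Local Open Scope classical_set_scope.
Local Open Scope ring_scope.

Section RingNotions.
Variables (T : Type) (P : set T) (add mul : T -> T -> T) (opp : T -> T)
  (zero : T).

Definition rann (X : set T) : set T :=
  [set a | P a /\ forall x, X x -> mul x a = zero].

(* X^(n.+1) : products a_1 ... a_(n+1) with a_i in X *)
Fixpoint setpow (X : set T) (n : nat) : set T :=
  match n with
  | 0 => X
  | n'.+1 => [set c | exists a b, X a /\ setpow X n' b /\ c = mul a b]
  end.

Definition idem (e : T) := P e /\ mul e e = e.

Definition prin_right (e : T) : set T :=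
  [set b | exists r, P r /\ b = mul e r].

Definition right_ideal (I : set T) : Prop :=
  I `<=` P /\ I zero /\ (forall x y, I x -> I y -> I (add x y)) /\
  (forall x, I x -> I (opp x)) /\ (forall x r, I x -> P r -> I (mul x r)).

Definition gen_right_Baer : Prop :=
  forall X : set T, X `<=` P -> X !=set0 ->
    exists n : nat, exists e : T, idem e /\ rann (setpow X n) = prin_right e.

Definition gen_right_quasi_Baer : Prop :=
  forall I : set T, right_ideal I ->
    exists n : nat, exists e : T, idem e /\ rann (setpow I n) = prin_right e.
End RingNotions.

Definition ring_gen_right_Baer (R : pzRingType) : Prop :=
  gen_right_Baer [set: R] (@GRing.mul R) 0.
Definition ring_gen_right_quasi_Baer (R : pzRingType) : Prop :=
  gen_right_quasi_Baer [set: R] (@GRing.add R) (@GRing.mul R) (fun x => - x) 0.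

Section OrderedMonoid.
Variables (S : Type) (op : S -> S -> S) (one : S).

Definition is_monoid : Prop :=
  (forall a b c, op a (op b c) = op (op a b) c) /\
  (forall a, op one a = a) /\ (forall a, op a one = a).

Definition is_partial_order (le : S -> S -> Prop) : Prop :=
  (forall a, le a a) /\ (forall a b, le a b -> le b a -> a = b) /\
  (forall a b c, le a b -> le b c -> le a c).

Definition lt_of (le : S -> S -> Prop) (a b : S) : Prop := le a b /\ a <> b.

Definition strictly_ordered_monoid (le : S -> S -> Prop) : Prop :=
  is_monoid /\ is_partial_order le /\
  (forall u v t, le u v -> le (op u t) (op v t) /\ le (op t u) (op t v)) /\
  (forall u v t, lt_of le u v ->
      lt_of le (op u t) (op v t) /\ lt_of le (op t u) (op t v)).

Definition quasitotally_ordered (le : S -> S -> Prop) : Prop :=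
  exists le' : S -> S -> Prop,
    (forall a b, le a b -> le' a b) /\
    (forall a b, le' a b \/ le' b a) /\
    strictly_ordered_monoid le'.

Definition artinian (le : S -> S -> Prop) (X : set S) : Prop :=
  ~ exists f : nat -> S, forall n, X (f n) /\ lt_of le (f n.+1) (f n).

Definition narrow (le : S -> S -> Prop) (X : set S) : Prop :=
  forall Y : set S, Y `<=` X ->
    (forall a b, Y a -> Y b -> a <> b -> ~ le a b /\ ~ le b a) ->
    finite_set Y.
End OrderedMonoid.

Section SGPS.
Variables (R : pzRingType) (S : choiceType) (op : S -> S -> S)
  (le : S -> S -> Prop) (omega : S -> {rmorphism R -> R}).

Definition supp (f : S -> R) : set S := [set s | f s != 0].

Definition is_sgps (f : S -> R) : Prop :=
  artinian le (supp f) /\ narrow le (supp f).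

Definition sgps_zero : S -> R := fun _ => 0.
Definition sgps_add (f g : S -> R) : S -> R := fun s => f s + g s.
Definition sgps_opp (f : S -> R) : S -> R := fun s => - f s.

Definition Xs (f g : S -> R) (s : S) : set (S * S) :=
  [set p | op p.1 p.2 = s /\ f p.1 != 0 /\ g p.2 != 0].

(* (fg)(s) = sum_{(u,v) in X_s(f,g)} f(u) omega_u(g(v))  (X_s finite for f,g in A) *)
Definition sgps_mul (f g : S -> R) : S -> R :=
  fun s => \sum_(p \in Xs f g s) f p.1 * omega p.1 (g p.2).

Definition sgps_gen_right_Baer : Prop :=
  gen_right_Baer is_sgps sgps_mul sgps_zero.
Definition sgps_gen_right_quasi_Baer : Prop :=
  gen_right_quasi_Baer is_sgps sgps_add sgps_mul sgps_opp sgps_zero.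

Definition SO_Armendariz : Prop :=
  forall f g : S -> R, is_sgps f -> is_sgps g ->
    sgps_mul f g = sgps_zero ->
    forall s t, f s * omega s (g t) = 0.
End SGPS.

Definition compatible_endo (R : pzRingType) (sigma : R -> R) : Prop :=
  forall a b : R, a * b = 0 <-> a * sigma b = 0.

Definition S_compatible (R : pzRingType) (S : Type) (omega : S -> {rmorphism R -> R}) :=
  forall s, compatible_endo (omega s).

Definition monoid_hom_omega (R : pzRingType) (S : Type) (op : S -> S -> S) (one : S)
  (omega : S -> {rmorphism R -> R}) : Prop :=
  (forall x, omega one x = x) /\
  (forall s t x, omega (op s t) x = omega s (omega t x)).

(* Main.v *)
Require Import Defs.
From HB Require Import structures.
From mathcomp Require Import all_boot all_order all_algebra.
From mathcomp Require Import boolp classical_sets cardinality fsbigop.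
From mathcomp Require Import functions finmap.
Set Implicit Arguments. Unset Strict Implicit. Unset Printing Implicit Defensive.
Import GRing.Theory.
Local Open Scope classical_set_scope.

Lemma inf_seq (T : Type) (Y : set T) : ~ finite_set Y ->
  exists f : nat -> T, (forall k, Y (f k)) /\ injective f.
Proof.
move=> /infiniteP /card_leP [g].
pose f := fun n : nat => val (g (@SigSub _ _ [set: nat] n (mem_set I))).
exists f; split.
  move=> k; rewrite /f; exact: set_valP.
move=> a b; rewrite /f => /val_inj.
have := @inj _ _ _ g.
move=> H E; have := H _ _ (mem_set I) (mem_set I) E.
by case.
Qed.

Lemma fin_seq (T : Type) (Y : set T) (f : nat -> T) : finite_set Y ->
  (forall k, Y (f k)) -> injective f -> False.
Proof.
move=> fY Yf inj_f.
have fI : finite_set (f @` [set: nat]).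
  by apply: sub_finite_set fY => _ [k _ <-].
have := @inj_card_eq _ _ [set: nat] f (in2W inj_f).
move/eq_finite_set => H.
by apply: infinite_nat; rewrite -H.
Qed.

Lemma chain_trans (T : Type) (r : T -> T -> Prop) (f : nat -> T) :
  (forall a b c, r a b -> r b c -> r a c) ->
  (forall k, r (f k) (f k.+1)) -> forall i j, (i < j)%N -> r (f i) (f j).
Proof.
move=> tr step i j; elim: j => // j IH.
rewrite ltnS leq_eqVlt => /orP[/eqP->|/IH h]; first exact: step.
exact: tr h (step j).
Qed.

Lemma iter_seq (N : nat) (Q : nat -> nat -> Prop) :
  (forall n, (N <= n)%N -> exists j, (n < j)%N /\ Q n j) ->
  exists psi : nat -> nat, psi 0%N = N /\
    forall k, (N <= psi k)%N /\ (psi k < psi k.+1)%N /\ Q (psi k) (psi k.+1).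
Proof.
move=> H.
have [nx Hnx] : exists nx : nat -> nat, forall n, (N <= n)%N -> (n < nx n)%N /\ Q n (nx n).
  have H' : forall n, exists j, (N <= n)%N -> (n < j)%N /\ Q n j.
    move=> n; have [Nn|Nn] := boolP (N <= n)%N.
      by have [j Hj] := H n Nn; exists j.
    by exists 0%N => NN; case/negP: Nn.
  by have [nx Hnx] := choice H'; exists nx.
exists (fun k => iter k nx N); split => // k.
have Nk : (N <= iter k nx N)%N.
  elim: k => //= k IH; have [lt _] := Hnx _ IH.
  exact: leq_trans IH (ltnW lt).
by split => //=; apply: Hnx.
Qed.

Lemma subseq_inf (P : nat -> Prop) :
  (forall N, exists n, (N <= n)%N /\ P n) ->
  exists phi : nat -> nat, (forall k, P (phi k)) /\ (forall k, (phi k < phi k.+1)%N).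
Proof.
move=> H; have [n0 [_ Pn0]] := H 0%N.
have [psi [p0 Hpsi]] : exists psi : nat -> nat, psi 0%N = n0 /\
    forall k, (n0 <= psi k)%N /\ (psi k < psi k.+1)%N /\ P (psi k.+1).
  apply: (@iter_seq n0 (fun _ j => P j)) => n _.
  have [j [lej Pj]] := H n.+1; by exists j.
exists psi; split; last by move=> k; have [_ []] := Hpsi k.
by case=> [|k]; [rewrite p0 | have [_ []] := Hpsi k].
Qed.

Definition wpo (S : Type) (le : S -> S -> Prop) (X : set S) :=
  forall x : nat -> S, (forall n, X (x n)) ->
    exists i j, (i < j)%N /\ le (x i) (x j).

Lemma lt_rev_trans (S : Type) (le : S -> S -> Prop) : is_partial_order le ->
  forall a b c : S, lt_of le b a -> lt_of le c b -> lt_of le c a.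
Proof.
move=> [refl [anti tr]] a b c [ba nba] [cb ncb]; split; first exact: tr cb ba.
move=> ca; subst c; apply: nba; exact: anti ba cb.
Qed.

Lemma an_wpo (S : Type) (le : S -> S -> Prop) (X : set S) : is_partial_order le ->
  artinian le X -> narrow le X -> wpo le X.
Proof.
move=> po; have [refl [anti tr]] := po.
move=> art nar x Xx; apply: contrapT => bad.
have bad' : forall i j, (i < j)%N -> ~ le (x i) (x j).
  by move=> i j ij H; apply: bad; exists i, j.
pose T n := forall j, (n < j)%N -> ~ lt_of le (x j) (x n).
have [HT|HT] := pselect (forall N, exists n, (N <= n)%N /\ T n).
  have [phi [Tphi incphi]] := subseq_inf HT.
  have mono : forall i j, (i < j)%N -> (phi i < phi j)%N.
    by apply: (@chain_trans _ (fun a b => (a < b)%N)) => // a b c; apply: ltn_trans.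
  have incomp : forall k1 k2, (k1 < k2)%N ->
      ~ le (x (phi k1)) (x (phi k2)) /\ ~ le (x (phi k2)) (x (phi k1)).
    move=> k1 k2 k12; have p12 := mono _ _ k12; split; first exact: bad'.
    move=> H; apply: (Tphi k1 _ p12); split => // E.
    apply: (bad' _ _ p12); rewrite E; exact: refl.
  have injf : injective (fun k => x (phi k)).
    move=> k1 k2 /= E; apply: contrapT => ne.
    have [k12|k21|] := ltngtP k1 k2; last by [].
      by have [+ _] := incomp _ _ k12; rewrite E; apply.
    by have [+ _] := incomp _ _ k21; rewrite E; apply.
  apply: (@fin_seq _ (range (fun k => x (phi k))) (fun k => x (phi k))) => //.
  apply: nar; first by move=> _ [k _ <-].
  move=> _ _ [k1 _ <-] [k2 _ <-] ne.
  have [k12|k21|E] := ltngtP k1 k2.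
  - exact: incomp.
  - by have [h1 h2] := incomp _ _ k21; split.
  - by subst.
have [N HN] : exists N, forall n, (N <= n)%N ->
    exists j, (n < j)%N /\ lt_of le (x j) (x n).
  apply: contrapT => nN; apply: HT => N; apply: contrapT => nn.
  apply: nN; exists N => n Nn; apply: contrapT => nj.
  apply: nn; exists n; split => // j nj' ltj; apply: nj; by exists j.
have [psi [_ Hpsi]] := iter_seq HN.
apply: art; exists (fun k => x (psi k)) => n; split => //.
by have [_ []] := Hpsi n.
Qed.

Lemma wpo_art (S : Type) (le : S -> S -> Prop) (X : set S) : is_partial_order le ->
  wpo le X -> artinian le X.
Proof.
move=> po W [f Hf]; have [refl [anti tr]] := po.
have [i [j [ij le_ij]]] := W f (fun n => (Hf n).1).
have := @chain_trans _ (fun a b => lt_of le b a) f (lt_rev_trans po)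
  (fun k => (Hf k).2) _ _ ij.
move=> [lji nji]; apply: nji; exact: anti lji le_ij.
Qed.

Lemma wpo_nar (S : Type) (le : S -> S -> Prop) (X : set S) :
  wpo le X -> narrow le X.
Proof.
move=> W Y YX anti; apply: contrapT => /inf_seq [f [Yf injf]].
have [i [j [ij le_ij]]] := W f (fun n => YX _ (Yf n)).
have ne : f i <> f j by move=> /injf E; move: ij; rewrite E ltnn.
by have [] := anti _ _ (Yf i) (Yf j) ne.
Qed.

Lemma wpo_sub (S : Type) (le : S -> S -> Prop) (A B : set S) :
  A `<=` B -> wpo le B -> wpo le A.
Proof. by move=> AB W x Ax; apply: W => n; apply: AB. Qed.

Lemma wpo_set0 (S : Type) (le : S -> S -> Prop) : wpo le set0.
Proof. by move=> x /(_ 0%N). Qed.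

Lemma wpo_set1 (S : Type) (le : S -> S -> Prop) (c : S) :
  (forall a, le a a) -> wpo le [set c].
Proof.
move=> refl x Hx; exists 0%N, 1%N; split => //.
by rewrite (Hx 0%N) (Hx 1%N).
Qed.

Lemma wpo_union (S : Type) (le : S -> S -> Prop) (A B : set S) :
  wpo le A -> wpo le B -> wpo le (A `|` B).
Proof.
move=> WA WB x Hx.
have [HA|HA] := pselect (forall N, exists n, (N <= n)%N /\ A (x n)).
  have [phi [Aphi incphi]] := subseq_inf HA.
  have mono : forall i j, (i < j)%N -> (phi i < phi j)%N.
    by apply: (@chain_trans _ (fun a b => (a < b)%N)) => // a b c; apply: ltn_trans.
  have [i [j [ij le_ij]]] := WA (fun k => x (phi k)) Aphi.
  by exists (phi i), (phi j); split => //; apply: mono.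
have [N HN] : exists N, forall n, (N <= n)%N -> B (x n).
  apply: contrapT => nN; apply: HA => N; apply: contrapT => nn.
  apply: nN; exists N => n Nn; have [An|//] := Hx n.
  by case: nn; exists n.
have [i [j [ij le_ij]]] := WB (fun k => x (N + k)%N) (fun k => HN _ (leq_addr _ _)).
by exists (N + i)%N, (N + j)%N; split => //; rewrite ltn_add2l.
Qed.

Lemma wpo_pair (S : Type) (le : S -> S -> Prop) (A B : set S) :
  (forall a b c, le a b -> le b c -> le a c) ->
  wpo le A -> wpo le B -> forall a b : nat -> S, (forall n, A (a n)) ->
  (forall n, B (b n)) -> exists i j, (i < j)%N /\ le (a i) (a j) /\ le (b i) (b j).
Proof.
move=> tr WA WB a b Aa Bb.
have [HG|HG] := pselect (forall N, exists n, (N <= n)%N /\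
    forall j, (n < j)%N -> ~ le (a n) (a j)).
  have [phi [Gphi incphi]] := subseq_inf HG.
  have mono : forall i j, (i < j)%N -> (phi i < phi j)%N.
    by apply: (@chain_trans _ (fun a b => (a < b)%N)) => // x y z; apply: ltn_trans.
  have [i [j [ij le_ij]]] := WA (fun k => a (phi k)) (fun k => Aa _).
  by case: (Gphi i (phi j) (mono _ _ ij)).
have [N HN] : exists N, forall n, (N <= n)%N -> exists j, (n < j)%N /\ le (a n) (a j).
  apply: contrapT => nN; apply: HG => N; apply: contrapT => nn.
  apply: nN; exists N => n Nn; apply: contrapT => nj.
  apply: nn; exists n; split => // j nj' lej; apply: nj; by exists j.
have [psi [_ Hpsi]] := iter_seq HN.
have mono : forall i j, (i < j)%N -> (psi i < psi j)%N.
  by apply: (@chain_trans _ (fun a b => (a < b)%N)) => [x y z|k]; 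
    [apply: ltn_trans | have [_ []] := Hpsi k].
have monoa : forall i j, (i < j)%N -> le (a (psi i)) (a (psi j)).
  by apply: (@chain_trans _ le (fun k => a (psi k))) => // k; have [_ []] := Hpsi k.
have [i [j [ij le_ij]]] := WB (fun k => b (psi k)) (fun k => Bb _).
by exists (psi i), (psi j); split; [apply: mono | split => //; apply: monoa].
Qed.

Lemma wpo_prod (S : Type) (op : S -> S -> S) (le : S -> S -> Prop) (A B : set S) :
  (forall a b c, le a b -> le b c -> le a c) ->
  (forall u v t, le u v -> le (op u t) (op v t) /\ le (op t u) (op t v)) ->
  wpo le A -> wpo le B -> wpo le [set z | exists a b, A a /\ B b /\ z = op a b].
Proof.
move=> tr mon WA WB z Hz.
have H : forall n, exists ab : S * S, A ab.1 /\ B ab.2 /\ z n = op ab.1 ab.2.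
  by move=> n; have [a [b [Aa [Bb E]]]] := Hz n; exists (a, b).
have [ab Hab] := choice H.
have [i [j [ij [la lb]]]] := wpo_pair tr WA WB
  (fun n => (Hab n).1) (fun n => (Hab n).2.1).
exists i, j; split => //; rewrite (Hab i).2.2 (Hab j).2.2.
apply: tr (mon _ _ _ la).1 (mon _ _ _ lb).2.
Qed.

Local Open Scope ring_scope.

Section RingPart.
Variables (R : pzRingType) (S : choiceType) (op : S -> S -> S) (one : S)
  (omega : S -> {rmorphism R -> R}).
Hypothesis Hmon : is_monoid op one.
Hypothesis Hom : monoid_hom_omega op one omega.

Local Notation mul := (sgps_mul op omega).

Definition cst (a : R) : S -> R := fun s => if s == one then a else 0.

Lemma mulE f g s : mul f g s = \sum_(p \in [set: S * S])
  (if op p.1 p.2 == s then f p.1 * omega p.1 (g p.2) else 0).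
Proof.
rewrite /sgps_mul fsbig_mkcond; apply: eq_fsbigr => p _.
rewrite /patch; case: (boolP (p \in Xs op f g s)) => [|nX].
  by rewrite in_setE => -[-> _]; rewrite eqxx.
case: eqP => // E.
have [f0|fn0] := eqVneq (f p.1) 0; first by rewrite f0 mul0r.
have [g0|gn0] := eqVneq (g p.2) 0; first by rewrite g0 rmorph0 mulr0.
by case/negP: nX; rewrite in_setE.
Qed.


Lemma sum_support1 (H : S * S -> R) q : (forall p, p != q -> H p = 0) ->
  \sum_(p \in [set: S * S]) H p = H q.
Proof.
move=> Hq; rewrite (fsbigTE [fset q]%fset) ?big_seq_fset1 // => p.
move=> pq; apply: Hq; apply: contra pq => /eqP ->; exact: fset11.
Qed.

Lemma cst_mul a b : mul (cst a) (cst b) = cst (a * b).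
Proof.
have [opA [op1l op1r]] := Hmon; have [om1 omM] := Hom.
apply/funext => s; rewrite mulE (@sum_support1 _ (one, one)) /=.
  rewrite /cst eqxx op1l om1 (eq_sym one); by case: eqP.
move=> [u v] ne /=; rewrite /cst.
case: (u =P one) => [eu|_]; last by rewrite mul0r; case: ifP.
case: (v =P one) => [ev|_]; first by move: ne; rewrite eu ev eqxx.
by rewrite rmorph0 mulr0; case: ifP.
Qed.

Lemma cst_mull a g : mul (cst a) g = fun s => a * g s.
Proof.
have [opA [op1l op1r]] := Hmon; have [om1 omM] := Hom.
apply/funext => s; rewrite mulE (@sum_support1 _ (one, s)) /=.
  by rewrite /cst op1l !eqxx om1.
move=> [u v] ne /=; rewrite /cst.
case: (u =P one) => [eu|_]; last by rewrite mul0r; case: ifP.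
rewrite eu op1l; case: (v =P s) => [ev|nv]; first by move: ne; rewrite eu ev eqxx.
by case: (op one v =P s) => // E; case: nv; rewrite -E op1l.
Qed.

Lemma supp_mul f g : supp (mul f g) `<=`
  [set z | exists a b, supp f a /\ supp g b /\ z = op a b].
Proof.
move=> s; rewrite /supp /= mulE => Hs; apply: contrapT => nE.
move/negP: Hs; apply; apply/eqP; apply: big1 => [[u v]] _ /=.
case: eqP => // E; apply: contrapT => /eqP ne; apply: nE; exists u, v.
split; [|split] => //=.
- by apply: contra ne => /eqP ->; rewrite mul0r.
- by apply: contra ne => /eqP ->; rewrite rmorph0 mulr0.
Qed.

Lemma sum_diff0 (H1 H2 : S * S -> R) :
  finite_set (H1 @^-1` [set~ 0]) ->
  (\sum_(p \in [set: S * S]) H1 p) = (\sum_(p \in [set: S * S]) H2 p) ->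
  (\sum_(p \in [set: S * S]) (H1 p - H2 p)) = 0.
Proof.
move=> F1 E.
have [F2|F2] := pselect (finite_set (H2 @^-1` [set~ 0])).
  have FU : finite_set (H1 @^-1` [set~ 0] `|` H2 @^-1` [set~ 0]).
    by rewrite finite_setU.
  have Z : forall (H : S * S -> R), (forall p, H1 p = 0 -> H2 p = 0 -> H p = 0) ->
      forall p, p \notin fset_set (H1 @^-1` [set~ 0] `|` H2 @^-1` [set~ 0]) -> H p = 0.
    move=> H HH p; rewrite in_fset_set // notin_setE /= => nU.
    by apply: HH; apply: contrapT => ne; apply: nU; [left | right].
  pose A := fset_set (H1 @^-1` [set~ 0] `|` H2 @^-1` [set~ 0]).
  have e0 : (\sum_(p \in [set: S * S]) (H1 p - H2 p)) = \sum_(p <- A) (H1 p - H2 p).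
    by apply: fsbigTE; apply: Z => p -> ->; rewrite subr0.
  have e1 : (\sum_(p \in [set: S * S]) H1 p) = \sum_(p <- A) H1 p.
    by apply: fsbigTE; apply: Z => p ->.
  have e2 : (\sum_(p \in [set: S * S]) H2 p) = \sum_(p <- A) H2 p.
    by apply: fsbigTE; apply: Z => p _ ->.
  by rewrite e0 sumrB -e1 -e2 E subrr.
rewrite no_finite_support ?big_nil // setTI => Fd; apply: F2.
have FU : finite_set (H1 @^-1` [set~ 0] `|` (fun p => H1 p - H2 p) @^-1` [set~ 0]).
  by rewrite finite_setU.
apply: sub_finite_set FU => p /= H2p.
have [e1|e1] := eqVneq (H1 p) 0; last by left; apply/eqP.
right => /= e2; apply: H2p; apply/eqP.
by move: e2; rewrite e1 sub0r => /eqP; rewrite oppr_eq0.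
Qed.


Lemma cst_term0 a g s p : p != (one, s) ->
  (if op p.1 p.2 == s then cst a p.1 * omega p.1 (g p.2) else 0) = 0.
Proof.
have [opA [op1l op1r]] := Hmon.
case: p => u v ne /=; rewrite /cst.
case: (u =P one) => [eu|_]; last by rewrite mul0r; case: ifP.
case: (op u v =P s) => // E; case/negP: ne; apply/eqP; congr pair => //.
by rewrite -E eu op1l.
Qed.

Variable le : S -> S -> Prop.
Hypothesis Hpo : is_partial_order le.
Hypothesis Hmono : forall u v t, le u v -> le (op u t) (op v t) /\ le (op t u) (op t v).

Lemma sgps_wpo (f : S -> R) : is_sgps le f <-> wpo le (supp f).
Proof.
split; first by move=> [a n]; apply: an_wpo.
by move=> W; split; [apply: wpo_art | apply: wpo_nar].
Qed.

Lemma sgps_sub_supp (f g : S -> R) : supp f `<=` supp g -> is_sgps le g -> is_sgps le f.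
Proof. by move=> fg /sgps_wpo W; apply/sgps_wpo; apply: wpo_sub W. Qed.

Lemma sgps_cst a : is_sgps le (cst a).
Proof.
apply/sgps_wpo; apply: (@wpo_sub _ _ _ [set one]); last first.
  by apply: wpo_set1; case: Hpo.
by move=> s; rewrite /supp /cst /=; case: (s =P one) => // _; rewrite eqxx.
Qed.

Lemma sgps_zero0 : is_sgps le (@sgps_zero R S).
Proof.
apply/sgps_wpo; apply: (@wpo_sub _ _ _ set0); last exact: wpo_set0.
by move=> s; rewrite /supp /sgps_zero /= eqxx.
Qed.

Lemma sgps_subr (f g : S -> R) : is_sgps le f -> is_sgps le g ->
  is_sgps le (fun s => f s - g s).
Proof.
move=> /sgps_wpo Wf /sgps_wpo Wg; apply/sgps_wpo.
apply: wpo_sub (wpo_union Wf Wg) => s; rewrite /supp /=.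
have [->|nf] := eqVneq (f s) 0; last by left.
by rewrite sub0r oppr_eq0 => ?; right.
Qed.

Lemma sgps_addr (f g : S -> R) : is_sgps le f -> is_sgps le g ->
  is_sgps le (sgps_add f g).
Proof.
move=> /sgps_wpo Wf /sgps_wpo Wg; apply/sgps_wpo.
apply: wpo_sub (wpo_union Wf Wg) => s; rewrite /supp /sgps_add /=.
have [->|nf] := eqVneq (f s) 0; last by left.
by rewrite add0r => ?; right.
Qed.

Lemma sgps_oppr (f : S -> R) : is_sgps le f -> is_sgps le (sgps_opp f).
Proof.
by apply: sgps_sub_supp => s; rewrite /supp /sgps_opp /= oppr_eq0.
Qed.

Lemma sgps_mulr (f g : S -> R) : is_sgps le f -> is_sgps le g ->
  is_sgps le (mul f g).
Proof.
have [refl [anti tr]] := Hpo.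
move=> /sgps_wpo Wf /sgps_wpo Wg; apply/sgps_wpo.
apply: (wpo_sub (@supp_mul f g)); exact: wpo_prod tr Hmono Wf Wg.
Qed.

Hypothesis Harm : SO_Armendariz op le omega.

Lemma idem_coef (e : S -> R) : is_sgps le e -> mul e e = e ->
  forall t, e t = e one * e t.
Proof.
have [om1 omM] := Hom.
move=> Se ee t.
pose f := fun s => cst 1 s - e s.
have Sf : is_sgps le f by apply: sgps_subr => //; exact: sgps_cst.
have fe : mul f e = @sgps_zero R S.
  apply/funext => s; rewrite mulE /sgps_zero.
  pose H1 := fun p : S * S => if op p.1 p.2 == s then cst 1 p.1 * omega p.1 (e p.2) else 0.
  pose H2 := fun p : S * S => if op p.1 p.2 == s then e p.1 * omega p.1 (e p.2) else 0.
  transitivity (\sum_(p \in [set: S * S]) (H1 p - H2 p)).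
    apply: eq_fsbigr => p _; rewrite /H1 /H2 /f; case: ifP => _; last by rewrite subr0.
    by rewrite mulrBl.
  apply: sum_diff0.
    apply: (@sub_finite_set _ _ [set (one, s)]); last exact: finite_set1.
    move=> p /= H; apply/eqP; apply: contraT => ne; apply/eqP.
    by move: H; rewrite /H1 cst_term0.
  have -> : (\sum_(p \in [set: S * S]) H1 p) = mul (cst 1) e s by rewrite mulE.
  have -> : (\sum_(p \in [set: S * S]) H2 p) = mul e e s by rewrite mulE.
  by rewrite cst_mull ee mul1r.
have := Harm Sf Se fe one t.
rewrite /f /cst eqxx om1 mulrBl mul1r => /eqP; rewrite subr_eq0 => /eqP.
by [].
Qed.

Lemma pow_cst (X : set R) (X' : set (S -> R)) : (forall a, X a -> X' (cst a)) ->
  forall k x, setpow *%R X k x -> setpow mul X' k (cst x).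
Proof.
move=> HX; elim=> [|k IH] x /=; first exact: HX.
move=> [a [b [Xa [Hb ->]]]]; exists (cst a), (cst b); split; first exact: HX.
by split; [apply: IH | rewrite cst_mul].
Qed.

Lemma pow_cst_inv (X : set R) k y :
  setpow mul [set c | exists a, X a /\ c = cst a] k y ->
  exists x, setpow *%R X k x /\ y = cst x.
Proof.
elim: k y => [|k IH] y /=; first by move=> [a [Xa ->]]; exists a.
move=> [c [d [[a [Xa ->]] [/IH [x [Hx ->]] ->]]]].
by exists (a * x); split; [exists a, x | rewrite cst_mul].
Qed.

Lemma cst0 : cst 0 = @sgps_zero R S.
Proof. by apply/funext => s; rewrite /cst /sgps_zero; case: ifP. Qed.

Lemma part1 : sgps_gen_right_Baer op le omega -> ring_gen_right_Baer R.
Proof.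
have [om1 omM] := Hom.
move=> HA X _ [x0 Xx0].
pose X' := [set c | exists a, X a /\ c = cst a].
have sX' : X' `<=` is_sgps le by move=> _ [a [_ ->]]; apply: sgps_cst.
have [n [e [[Se ee] Heq]]] := HA X' sX' (ex_intro _ (cst x0) (ex_intro _ x0 (conj Xx0 erefl))).
have K1 := idem_coef Se ee.
have K2 : forall x, setpow *%R X n x -> x * e one = 0.
  move=> x Hx.
  have : rann (is_sgps le) mul (@sgps_zero R S) (setpow mul X' n) e.
    by rewrite Heq; exists e; split => //; rewrite ee.
  move=> [_ /(_ (cst x)) H].
  have := Harm (sgps_cst x) Se (H (pow_cst (fun a Xa => ex_intro _ a (conj Xa erefl)) Hx)) one one.
  by rewrite /cst eqxx om1.
have K3 : forall b, rann [set: R] *%R 0 (setpow *%R X n) b -> b = e one * b.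
  move=> b [_ Hb].
  have : rann (is_sgps le) mul (@sgps_zero R S) (setpow mul X' n) (cst b).
    split; first exact: sgps_cst.
    by move=> c /pow_cst_inv [x [Hx ->]]; rewrite cst_mul Hb // cst0.
  rewrite Heq => -[r [Sr E]].
  have : cst b one = mul e r one by rewrite E.
  rewrite /cst eqxx => ->; rewrite /sgps_mul big_distrr; apply: eq_bigr => p _.
  by rewrite /= mulrA -K1.
exists n, (e one); split; first by split => //; rewrite -K1.
apply/seteqP; split.
  by move=> b Hb; exists b; split => //; exact: K3.
move=> _ [r [_ ->]]; split => // x Hx; by rewrite mulrA K2 // mul0r.
Qed.

Lemma part2 : S_compatible omega -> sgps_gen_right_quasi_Baer op le omega ->
  ring_gen_right_quasi_Baer R.
Proof.
have [om1 omM] := Hom.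
move=> Hc HA I [_ [I0 [Iadd [Iopp Imul]]]].
pose I' := [set f : S -> R | is_sgps le f /\ forall s, I (f s)].
have cI' : forall a, I a -> I' (cst a).
  move=> a Ia; split; first exact: sgps_cst.
  by move=> s; rewrite /cst; case: ifP.
have rI' : right_ideal (is_sgps le) (@sgps_add R S) mul (@sgps_opp R S) (@sgps_zero R S) I'.
  split; first by move=> f [].
  split; first by split; [exact: sgps_zero0 | move=> s; exact: I0].
  split; first by move=> f g [Sf If] [Sg Ig]; split; [exact: sgps_addr | move=> s; exact: Iadd].
  split; first by move=> f [Sf If]; split; [exact: sgps_oppr | move=> s; exact: Iopp].
  move=> f r [Sf If] Sr; split; first exact: sgps_mulr.
  move=> s; rewrite /sgps_mul; apply: big_ind => // p _.
  by apply: Imul.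
have [n [e [[Se ee] Heq]]] := HA I' rI'.
have K1 := idem_coef Se ee.
have K2 : forall x, setpow *%R I n x -> x * e one = 0.
  move=> x Hx.
  have : rann (is_sgps le) mul (@sgps_zero R S) (setpow mul I' n) e.
    by rewrite Heq; exists e; split => //; rewrite ee.
  move=> [_ /(_ (cst x)) H].
  have := Harm (sgps_cst x) Se (H (pow_cst cI' Hx)) one one.
  by rewrite /cst eqxx om1.
have Claim : forall k h, setpow mul I' k h -> forall x c,
    (forall y, setpow *%R I k y -> x * y * c = 0) -> forall s, x * h s * c = 0.
  elim=> [|k IH] h /=.
    by move=> [Sh Ih] x c Hy s; apply: Hy.
  move=> [f [g [[Sf If] [Hg ->]]]] x c Hy s.
  rewrite /sgps_mul big_distrr big_distrl; apply: big1 => p _ /=.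
  rewrite mulrA; apply: (proj2 (Hc p.1 _ _)); rewrite -mulrA -rmorphM.
  apply: (proj1 (Hc p.1 _ _)); rewrite mulrA.
  apply: (IH g Hg) => y Hy'; rewrite -(mulrA x); apply: Hy.
  by exists (f p.1), y.
have K3 : forall b, rann [set: R] *%R 0 (setpow *%R I n) b -> b = e one * b.
  move=> b [_ Hb].
  have : rann (is_sgps le) mul (@sgps_zero R S) (setpow mul I' n) (cst b).
    split; first exact: sgps_cst.
    move=> h Hh; apply/funext => s; rewrite /sgps_mul /sgps_zero.
    apply: big1 => -[u v] _ /=; rewrite /cst.
    case: (v =P one) => _; last by rewrite rmorph0 mulr0.
    apply: (proj1 (Hc u _ _)).
    have := Claim n h Hh 1 b (fun y Hy => etrans (congr1 (fun z => z * b) (mul1r y)) (Hb y Hy)) u.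
    by rewrite mul1r.
  rewrite Heq => -[r [Sr E]].
  have : cst b one = mul e r one by rewrite E.
  rewrite /cst eqxx => ->; rewrite /sgps_mul big_distrr; apply: eq_bigr => p _.
  by rewrite /= mulrA -K1.
exists n, (e one); split; first by split => //; rewrite -K1.
apply/seteqP; split.
  by move=> b Hb; exists b; split => //; exact: K3.
move=> _ [r [_ ->]]; split => // x Hx; by rewrite mulrA K2 // mul0r.
Qed.

End RingPart.

Theorem proposition3p5 (R : pzRingType) (S : choiceType) (op : S -> S -> S)
  (one : S) (le : S -> S -> Prop) (omega : S -> {rmorphism R -> R})
  (HS : strictly_ordered_monoid op one le)
  (Hqt : quasitotally_ordered op one le)
  (Hom : monoid_hom_omega op one omega)
  (Harm : SO_Armendariz op le omega) :
  (sgps_gen_right_Baer op le omega -> ring_gen_right_Baer R) /\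
  (S_compatible omega -> sgps_gen_right_quasi_Baer op le omega ->
     ring_gen_right_quasi_Baer R).
Proof.
have [Hmon [Hpo [Hmono _]]] := HS.
split.
  exact: (part1 Hmon Hom Hpo Harm).
exact: (part2 Hmon Hom Hpo Hmono Harm).
Qed.
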